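(* Let $Q$ be a commutative A-loop and define $x\oplus y = \big( ((xy)\backslash x)\cdot((yx)\backslash y)\big)^{-1}$. Then $(Q,\oplus)$ is a power-associative commutative loop with the same neutral element as $Q$, and powers in $(Q,\oplus)$ coincide with powers in $Q$.
   Context: A loop is a set with a binary operation and neutral element $1$ in which all left and right translations are bijections; $\mathrm{Inn}(Q)$ is the stabilizer of $1$ in the group generated by all translations. A commutative A-loop is a commutative loop all of whose inner mappings are automorphisms. $x\backslash y$ is the unique $z$ with $xz=y$, $x^{-1}=x\backslash 1$. Powers are defined by $x^n=1L_x^n$, $n\in\mathbb{Z}$, where $L_x$ is left translation in the relevant loop; a loop is power-associative if each element generates a subgroup. *)

(* Defs.v *)
From mathcomp Require Import ssreflect ssrfun ssrbool.
From Stdlib Require Import ZArith.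

Set Implicit Arguments.

Section Loops.
Variable T : Type.
Variable mul : T -> T -> T.
Variable e : T.

Definition is_loop : Prop :=
  (forall x, mul e x = x) /\ (forall x, mul x e = x) /\
  (forall x, bijective (mul x)) /\ (forall x, bijective (fun y => mul y x)).

Definition commutative_op : Prop := forall x y, mul x y = mul y x.

Definition is_ldiv (ldiv : T -> T -> T) : Prop := forall x y, mul x (ldiv x y) = y.
Definition is_rdiv (rdiv : T -> T -> T) : Prop := forall x y, mul (rdiv y x) x = y.

Variables ldiv rdiv : T -> T -> T.

(* Elements of the multiplication group Mlt(Q): the group generated by all
   translations L_x, R_x consists of the finite composites of
   L_x, R_x and their inverses L_x^{-1} = ldiv x, R_x^{-1} = rdiv _ x. *)
Inductive in_mlt : (T -> T) -> Prop :=
  | mlt_id : in_mlt (fun y => y)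
  | mlt_L x f : in_mlt f -> in_mlt (fun y => mul x (f y))
  | mlt_Linv x f : in_mlt f -> in_mlt (fun y => ldiv x (f y))
  | mlt_R x f : in_mlt f -> in_mlt (fun y => mul (f y) x)
  | mlt_Rinv x f : in_mlt f -> in_mlt (fun y => rdiv (f y) x).

Definition inner_mapping (f : T -> T) : Prop := in_mlt f /\ f e = e.

Definition automorphism (f : T -> T) : Prop :=
  bijective f /\ forall x y, f (mul x y) = mul (f x) (f y).

Definition commutative_A_loop : Prop :=
  is_loop /\ is_ldiv ldiv /\ is_rdiv rdiv /\ commutative_op /\
  forall f, inner_mapping f -> automorphism f.

Inductive gen (x : T) : T -> Prop :=
  | gen_x : gen x x
  | gen_e : gen x e
  | gen_mul a b : gen x a -> gen x b -> gen x (mul a b)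
  | gen_ldiv a b : gen x a -> gen x b -> gen x (ldiv a b)
  | gen_rdiv a b : gen x a -> gen x b -> gen x (rdiv a b).

(* Power-associative: every element generates a subgroup, i.e. the subloop
   generated by x is associative. *)
Definition power_associative : Prop :=
  forall x a b c, gen x a -> gen x b -> gen x c ->
    mul a (mul b c) = mul (mul a b) c.

Definition lpow (x : T) (n : Z) : T :=
  match n with
  | Z0 => e
  | Zpos p => Nat.iter (Pos.to_nat p) (mul x) e
  | Zneg p => Nat.iter (Pos.to_nat p) (ldiv x) e
  end.

End Loops.

Definition linv (T : Type) (ldiv : T -> T -> T) (e x : T) : T := ldiv x e.

Definition oplus (T : Type) (mul ldiv : T -> T -> T) (e : T) (x y : T) : T :=
  linv ldiv e (mul (ldiv (mul x y) x) (ldiv (mul y x) y)).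

(* Main.v *)
Require Import Defs.
From mathcomp Require Import ssreflect ssrfun ssrbool.
From Stdlib Require Import ZArith Lia.


Section Base.
Variables (T : Type) (mul ldiv rdiv : T -> T -> T) (e : T).
Hypothesis HA : commutative_A_loop mul e ldiv rdiv.
Local Open Scope Z_scope.

Lemma mulC a b : mul a b = mul b a.
Proof. by case: HA => _ [_ [_ [C _]]]; apply: C. Qed.
Lemma mul1l a : mul e a = a.
Proof. by case: HA => [[H _] _]. Qed.
Lemma mul1r a : mul a e = a.
Proof. by case: HA => [[_ [H _]] _]. Qed.
Lemma mld a b : mul a (ldiv a b) = b.
Proof. by case: HA => _ [H _]; apply: H. Qed.
Lemma mul_inj a b c : mul a b = mul a c -> b = c.
Proof.
case: HA => [[_ [_ [Hb _]]] _] H.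
case: (Hb a) => g K1 K2. by rewrite -(K1 b) -(K1 c) H.
Qed.
Lemma ldm a b : ldiv a (mul a b) = b.
Proof. apply: (@mul_inj a). by rewrite mld. Qed.
Lemma ldm' a b : ldiv a (mul b a) = b.
Proof. by rewrite mulC ldm. Qed.
Lemma lds a : ldiv a a = e.
Proof. by have := ldm a e; rewrite mul1r. Qed.
Lemma lde b : ldiv e b = b.
Proof. by have := ldm e b; rewrite mul1l. Qed.

Definition W p q t := ldiv (mul p q) (mul p (mul q t)).

Lemma W_auto p q : automorphism mul (W p q).
Proof.
case: HA => _ [_ [_ [_ HI]]]. apply: HI. split.
- exact: (mlt_Linv _ (mlt_L _ (mlt_L _ (mlt_id _ _ _)))).
- by rewrite /W mul1r lds.
Qed.
Lemma Aw p q u v : ldiv (mul p q) (mul p (mul q (mul u v))) =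
  mul (ldiv (mul p q) (mul p (mul q u))) (ldiv (mul p q) (mul p (mul q v))).
Proof. by case: (W_auto p q) => _ H; apply: H. Qed.
Lemma aux_mld a b : mul a (ldiv a b) = b. Proof. exact: mld. Qed.
Lemma aip0 (x y : T) :
  ldiv (mul x y) e = mul (ldiv x e) (ldiv y e).
Proof.
pose t3 := ldiv x e.
pose t4 := ldiv y e.
pose t5 := mul x y.
pose t6 := ldiv t5 e.
pose t7 := mul t3 t4.
pose t8 := mul x x.
pose t11 := mul x t5.
pose t13 := mul x t3.
pose t14 := mul x t13.
pose t16 := mul x t4.
pose t24 := mul x t7.
pose t30 := mul y x.
pose t31 := mul x t30.
pose t32 := ldiv t5 t31.
pose t36 := mul y t3.
pose t37 := mul x t36.
pose t38 := ldiv t5 t37.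
pose t54 := mul t3 x.
pose t55 := mul x t54.
pose t56 := ldiv t13 t55.
pose t57 := mul t3 y.
pose t58 := mul x t57.
pose t59 := ldiv t13 t58.
pose t64 := mul t3 t5.
pose t65 := mul x t64.
pose t73 := mul t3 e.
pose t106 := mul t5 t3.
pose t115 := mul t5 t6.
pose t118 := mul t5 t7.
pose t121 := mul t5 e.
pose t160 := mul t7 t5.
pose t216 := mul y t73.
pose t282 := mul t3 t8.
pose t283 := ldiv t54 t282.
pose t284 := ldiv t54 t64.
pose t285 := mul t3 t13.
pose t289 := mul t3 t11.
pose t320 := mul t3 t64.
pose t533 := mul t5 t54.
pose t534 := ldiv t106 t533.
pose t535 := mul t5 t57.
pose t536 := ldiv t106 t535.
pose t539 := ldiv t106 t118.
pose t540 := mul t5 t64.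
pose t733 := mul t7 t24.
pose t794 := mul t7 t115.
pose t795 := ldiv t160 t794.
pose t842 := mul e t3.
pose t885 := mul t56 t59.
pose t909 := mul t283 t284.
pose t941 := mul t534 t536.
pose t4069 := mul t36 x.
pose t4079 := mul t36 t5.
pose t4080 := ldiv t4069 t4079.
pose t4081 := mul t36 t16.
pose t4082 := ldiv t4069 t4081.
pose t4083 := mul t4080 t4082.
pose t4103 := mul t536 t539.
pose t15038 := mul e t795.
pose t15039 := mul t5 t15038.
pose t23980 := mul t534 t59.
have E3 : t3 = ldiv x e := erefl.
have E4 : t4 = ldiv y e := erefl.
have E5 : t5 = mul x y := erefl.
have E6 : t6 = ldiv t5 e := erefl.
have E7 : t7 = mul t3 t4 := erefl.
have E8 : t8 = mul x x := erefl.
have E11 : t11 = mul x t5 := erefl.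
have E13 : t13 = mul x t3 := erefl.
have E14 : t14 = mul x t13 := erefl.
have E16 : t16 = mul x t4 := erefl.
have E24 : t24 = mul x t7 := erefl.
have E30 : t30 = mul y x := erefl.
have E31 : t31 = mul x t30 := erefl.
have E32 : t32 = ldiv t5 t31 := erefl.
have E36 : t36 = mul y t3 := erefl.
have E37 : t37 = mul x t36 := erefl.
have E38 : t38 = ldiv t5 t37 := erefl.
have E54 : t54 = mul t3 x := erefl.
have E55 : t55 = mul x t54 := erefl.
have E56 : t56 = ldiv t13 t55 := erefl.
have E57 : t57 = mul t3 y := erefl.
have E58 : t58 = mul x t57 := erefl.
have E59 : t59 = ldiv t13 t58 := erefl.
have E64 : t64 = mul t3 t5 := erefl.
have E65 : t65 = mul x t64 := erefl.
have E73 : t73 = mul t3 e := erefl.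
have E106 : t106 = mul t5 t3 := erefl.
have E115 : t115 = mul t5 t6 := erefl.
have E118 : t118 = mul t5 t7 := erefl.
have E121 : t121 = mul t5 e := erefl.
have E160 : t160 = mul t7 t5 := erefl.
have E216 : t216 = mul y t73 := erefl.
have E282 : t282 = mul t3 t8 := erefl.
have E283 : t283 = ldiv t54 t282 := erefl.
have E284 : t284 = ldiv t54 t64 := erefl.
have E285 : t285 = mul t3 t13 := erefl.
have E289 : t289 = mul t3 t11 := erefl.
have E320 : t320 = mul t3 t64 := erefl.
have E533 : t533 = mul t5 t54 := erefl.
have E534 : t534 = ldiv t106 t533 := erefl.
have E535 : t535 = mul t5 t57 := erefl.
have E536 : t536 = ldiv t106 t535 := erefl.
have E539 : t539 = ldiv t106 t118 := erefl.
have E540 : t540 = mul t5 t64 := erefl.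
have E733 : t733 = mul t7 t24 := erefl.
have E794 : t794 = mul t7 t115 := erefl.
have E795 : t795 = ldiv t160 t794 := erefl.
have E842 : t842 = mul e t3 := erefl.
have E885 : t885 = mul t56 t59 := erefl.
have E909 : t909 = mul t283 t284 := erefl.
have E941 : t941 = mul t534 t536 := erefl.
have E4069 : t4069 = mul t36 x := erefl.
have E4079 : t4079 = mul t36 t5 := erefl.
have E4080 : t4080 = ldiv t4069 t4079 := erefl.
have E4081 : t4081 = mul t36 t16 := erefl.
have E4082 : t4082 = ldiv t4069 t4081 := erefl.
have E4083 : t4083 = mul t4080 t4082 := erefl.
have E4103 : t4103 = mul t536 t539 := erefl.
have E15038 : t15038 = mul e t795 := erefl.
have E15039 : t15039 = mul t5 t15038 := erefl.
have E23980 : t23980 = mul t534 t59 := erefl.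
change (t6 = t7).
clearbody t3 t4 t5 t6 t7 t8 t11 t13 t14 t16 t24 t30 t31 t32 t36 t37 t38 t54 t55 t56 t57 t58 t59 t64 t65 t73 t106 t115 t118 t121 t160 t216 t282 t283 t284 t285 t289 t320 t533 t534 t535 t536 t539 t540 t733 t794 t795 t842 t885 t909 t941 t4069 t4079 t4080 t4081 t4082 t4083 t4103 t15038 t15039 t23980.
have H1 := Aw x y x t3.
have H2 := Aw x t3 x y.
have H3 := Aw t3 x x y.
have H4 := Aw t3 x x t3.
have H5 := Aw t3 t5 x t3.
have H6 := Aw t36 x y t4.
have H7 := Aw t5 t3 x y.
have H8 := Aw t5 t3 y t4.
have H9 := Aw t7 x t3 t4.
have H10 := mulC x e.
have H11 := mulC x y.
have H12 := mulC x t216.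
have H13 := mulC x t3.
have H14 := mulC x t5.
have H15 := mulC x t7.
have H16 := mulC y e.
have H17 := mulC y x.
have H18 := mulC y t3.
have H19 := mulC t3 e.
have H20 := mulC t3 t5.
have H21 := mulC t32 t38.
have H22 := mulC t5 e.
have H23 := mulC t5 t36.
have H24 := mulC t5 t7.
have H25 := mulC t5 t842.
have H26 := mulC t534 t59.
have H27 := mulC t7 e.
have H28 := lde t289.
have H29 := lde t58.
have H30 := lde t64.
have H31 := lde t65.
have H32 := ldm x t64.
have H33 := ldm' t13 x.
have H34 := ldm' t13 t3.
have H35 := ldm' t24 t7.
have H36 := ldm' t284 t283.
have H37 := ldm t4080 t4082.
have H38 := ldm' t5 x.
have H39 := ldm t5 e.
have H40 := ldm t5 t15038.
have H41 := ldm' t5 t3.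
have H42 := ldm t534 t59.
have H43 := ldm t534 t536.
have H44 := ldm t536 t539.
have H45 := ldm t56 t59.
have H46 := ldm' t64 t3.
have H47 := ldm' t64 t5.
have H48 := lds t13.
have H49 := lds t64.
have H50 := mul1l x.
have H51 := mul1l y.
have H52 := mul1l t3.
have H53 := mul1l t5.
have H54 := mul1l t7.
have H55 := mld x e.
have H56 := mld t106 t118.
have H57 := mld t106 t533.
have H58 := mld t160 t794.
have H59 := mld y e.
have H60 := mld t5 e.
congruence.
Qed.



Lemma Wmul p q u v : W p q (mul u v) = mul (W p q u) (W p q v).
Proof. exact: Aw. Qed.
Lemma Wfix p q : W p q p = p.
Proof. by rewrite /W (mulC q p) ldm'. Qed.
Lemma Wldiv p q u v : W p q (ldiv u v) = ldiv (W p q u) (W p q v).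
Proof. apply: (mul_inj (W p q u)). by rewrite -Wmul !mld. Qed.
Lemma We p q : W p q e = e.
Proof. by rewrite /W mul1r lds. Qed.
Lemma Winv p q u : W p q (ldiv u e) = ldiv (W p q u) e.
Proof. by rewrite Wldiv We. Qed.

Lemma P1 x t : mul x (mul (mul x x) t) = mul (mul x x) (mul x t).
Proof.
have FxU u : W x x (mul x u) = mul x (W x x u) by rewrite Wmul Wfix.
pose u := ldiv x (ldiv x (mul (mul x x) t)).
have Hu : mul x (mul x u) = mul (mul x x) t by rewrite /u !mld.
have Fu : W x x u = t by rewrite /W Hu ldm.
have := FxU u; rewrite Fu /W Hu => H.
by rewrite -H mld.
Qed.

Lemma inv_eq a b : mul a b = e -> b = ldiv a e.
Proof. by move=> H; rewrite -H ldm. Qed.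

Lemma Pa x y : ldiv (ldiv (mul x y) x) e = W x y y.
Proof.
symmetry; apply: inv_eq. rewrite mulC.
have : W x y (mul y (ldiv y e)) = e by rewrite mld We.
rewrite Wmul => <-. congr mul. by rewrite /W mld mul1r.
Qed.

Lemma hinv x y v : W x y (ldiv y (ldiv x v)) = ldiv (mul x y) v.
Proof. by rewrite /W !mld. Qed.

Lemma main_id x y :
  ldiv (mul (ldiv (mul x y) x) (ldiv (mul y x) y)) e =
  ldiv x (ldiv x (mul (mul x x) (mul x (ldiv (ldiv (mul x y) x) e)))).
Proof.
rewrite aip0 Pa Pa.
have Nx : W y x x = W x y (ldiv y (ldiv x (mul y (mul x x)))).
  by rewrite hinv /W (mulC y x).
rewrite Nx -Wmul mld.
apply: (mul_inj x); rewrite mld; apply: (mul_inj x); rewrite mld.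
have hx w : mul x (W x y w) = W x y (mul x w) by rewrite Wmul Wfix.
rewrite !hx mld.
have hxx : mul x x = W x y (mul x x) by rewrite Wmul Wfix.

rewrite [X in _ = mul X _]hxx -Wmul. congr (W x y _).
by rewrite (mulC y (mul x x)) P1.
Qed.


Lemma inv_inv a : ldiv (ldiv a e) e = a.
Proof. apply: (mul_inj (ldiv a e)). by rewrite mld mulC mld. Qed.
Lemma Dinv u x : ldiv (ldiv u x) x = u.
Proof. apply: (mul_inj (ldiv u x)). by rewrite mld mulC mld. Qed.

Definition op := oplus mul ldiv e.

Lemma opE x y : op x y =
  ldiv x (ldiv x (mul (mul x x) (mul x (ldiv (ldiv (mul x y) x) e)))).
Proof. by rewrite /op /oplus /linv main_id. Qed.

Lemma opC x y : op x y = op y x.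
Proof. by rewrite /op /oplus /linv mulC. Qed.

Definition opinv x w := ldiv x (ldiv (ldiv (ldiv x (W x x w)) e) x).

Lemma op_bij x : bijective (op x).
Proof.
exists (opinv x) => [y|w].
- rewrite opE /opinv /W !mld ldm ldm inv_inv Dinv ldm //.
- rewrite opE /opinv mld Dinv inv_inv mld /W mld !ldm //.
Qed.

Lemma op1l x : op e x = x.
Proof. by rewrite /op /oplus /linv mul1l mul1r lds mul1r inv_inv. Qed.


Definition pw x n := lpow mul e ldiv x n.

Lemma pw_nat x k : pw x (Z.of_nat k) = Nat.iter k (mul x) e.
Proof. case: k => [|k] //=. by rewrite /pw /lpow SuccNat2Pos.id_succ. Qed.
Lemma pw_negnat x k : pw x (- Z.of_nat k) = Nat.iter k (ldiv x) e.
Proof. case: k => [|k] //=. by rewrite /pw /lpow SuccNat2Pos.id_succ. Qed.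

Lemma Zcases (n : Z) : (exists k, n = Z.of_nat k) \/ (exists k, n = - Z.of_nat (S k))%Z.
Proof.
case: (Z.le_gt_cases 0 n) => H.
- left; exists (Z.to_nat n); lia.
- right; exists (Z.to_nat (- n) - 1)%nat; lia.
Qed.

Lemma pwS x n : pw x (n + 1) = mul x (pw x n).
Proof.
case: (Zcases n) => [[k ->]|[k ->]].
- have -> : (Z.of_nat k + 1 = Z.of_nat (S k))%Z by lia.
  by rewrite !pw_nat.
- have -> : (- Z.of_nat (S k) + 1 = - Z.of_nat k)%Z by lia.
  by rewrite !pw_negnat /= mld.
Qed.
Lemma pwP x n : pw x (n - 1) = ldiv x (pw x n).
Proof.
have := pwS x (n - 1). have -> : (n - 1 + 1 = n)%Z by lia. by move=> ->; rewrite ldm.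
Qed.
Lemma pw0 x : pw x 0 = e. Proof. by []. Qed.
Lemma pw1 x : pw x 1 = x. Proof. by rewrite /pw /lpow /= mul1r. Qed.
Lemma pw2 x : pw x 2 = mul x x. Proof. by rewrite /pw /lpow /= mul1r. Qed.

Lemma Zind (P : Z -> Prop) : P 0%Z -> (forall n, P n -> P (n + 1)%Z) ->
  (forall n, P n -> P (n - 1)%Z) -> forall n, P n.
Proof.
move=> H0 HS HP n. elim/Z.peano_ind: n.
- exact: H0.
- by move=> n IH; rewrite -Z.add_1_r; apply: HS.
- by move=> n IH; rewrite -Z.sub_1_r; apply: HP.
Qed.

Lemma fixpw {p q x} : W p q x = x -> forall n, W p q (pw x n) = pw x n.
Proof.
move=> Hx; apply: Zind.
- by rewrite pw0 We.
- by move=> n IH; rewrite pwS Wmul Hx IH.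
- by move=> n IH; rewrite pwP Wldiv Hx IH.
Qed.

Lemma pw2n x n : mul (pw x 2) (pw x n) = pw x (n + 2).
Proof.
have := fixpw (Wfix x x) n. rewrite /W => H.
rewrite pw2 -{1}H mld.
have -> : (n + 2 = n + 1 + 1)%Z by lia.
by rewrite !pwS.
Qed.

Lemma pwcomm1 x k : mul (pw x k) x = pw x (k + 1).
Proof. by rewrite pwS mulC. Qed.

Lemma pwS3 x k n : mul (pw x k) (pw x (n + 1)) = mul (pw x (k + 1)) (pw x n).
Proof.
have Hx : W (pw x k) x x = x.
  rewrite /W pwcomm1 -pw2 (mulC _ (pw x 2)) pw2n.
  have -> : (k + 2 = k + 1 + 1)%Z by lia.
  by rewrite (pwS x (k + 1)) ldm'.
have := fixpw Hx n. rewrite /W pwcomm1 -pwS => H.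
by rewrite -H mld.
Qed.

Lemma pw_add x m n : mul (pw x m) (pw x n) = pw x (m + n).
Proof.
elim/Zind: m n => [n|m IH n|m IH n].
- by rewrite pw0 mul1l.
- by rewrite -pwS3 IH; congr (pw x _); lia.
- have := pwS3 x (m - 1) (n - 1).
  have -> : (m - 1 + 1 = m)%Z by lia. have -> : (n - 1 + 1 = n)%Z by lia.
  move=> ->; rewrite IH; congr (pw x _); lia.
Qed.

Lemma pw_inv x k : ldiv (pw x k) e = pw x (- k).
Proof. apply: (mul_inj (pw x k)). rewrite mld pw_add. by have -> : (k + - k = 0)%Z by lia. Qed.

Lemma pw_ldiv x m n : ldiv (pw x m) (pw x n) = pw x (n - m).
Proof. apply: (mul_inj (pw x m)). rewrite mld pw_add; congr (pw x _); lia. Qed.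

Lemma op_pw x m n : op (pw x m) (pw x n) = pw x (m + n).
Proof.
rewrite /op /oplus /linv !pw_add !pw_ldiv pw_add pw_inv; congr (pw x _); lia.
Qed.


Lemma op_inj x a b : op x a = op x b -> a = b.
Proof. by case: (op_bij x) => g H1 _ H; rewrite -(H1 a) H H1. Qed.

Lemma op_is_loop : is_loop op e.
Proof.
split; [exact: op1l|split; [by move=> x; rewrite opC op1l|split; [exact: op_bij|]]].
move=> x; case: (op_bij x) => g H1 H2; exists g => y.
- by rewrite opC H1.
- by rewrite opC H2.
Qed.

Lemma op_x_pw x k : op x (pw x k) = pw x (k + 1).
Proof. by rewrite -{1}(pw1 x) op_pw Z.add_comm. Qed.

Section Div.
Variables ldiv' rdiv' : T -> T -> T.
Hypothesis Hl : is_ldiv op ldiv'.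
Hypothesis Hr : is_rdiv op rdiv'.

Lemma ldiv'_pw x i j : ldiv' (pw x i) (pw x j) = pw x (j - i).
Proof. apply: (op_inj (pw x i)). rewrite Hl op_pw; congr (pw x _); lia. Qed.

Lemma rdiv'_pw x i j : rdiv' (pw x i) (pw x j) = pw x (i - j).
Proof.
apply: (op_inj (pw x j)). rewrite opC Hr opC op_pw; congr (pw x _); lia.
Qed.

Lemma gen_pw x a : gen op e ldiv' rdiv' x a -> exists k, a = pw x k.
Proof.
elim=> [|| a0 b0 _ [i ->] _ [j ->] | a0 b0 _ [i ->] _ [j ->] | a0 b0 _ [i ->] _ [j ->]].
- by exists 1%Z; rewrite pw1.
- by exists 0%Z.
- by exists (i + j)%Z; rewrite op_pw.
- by exists (j - i)%Z; rewrite ldiv'_pw.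
- by exists (i - j)%Z; rewrite rdiv'_pw.
Qed.

Lemma op_pa : power_associative op e ldiv' rdiv'.
Proof.
move=> x a b c /gen_pw [i ->] /gen_pw [j ->] /gen_pw [k ->].
rewrite !op_pw; congr (pw x _); lia.
Qed.

Lemma iter_op x k : Nat.iter k (op x) e = pw x (Z.of_nat k).
Proof.
elim: k => [|k IH]; first by [].
have -> : Nat.iter (S k) (op x) e = op x (Nat.iter k (op x) e) by [].
rewrite IH op_x_pw; congr (pw x _); lia.
Qed.

Lemma iter_ldiv' x k : Nat.iter k (ldiv' x) e = pw x (- Z.of_nat k).
Proof.
elim: k => [|k IH]; first by [].
have -> : Nat.iter (S k) (ldiv' x) e = ldiv' x (Nat.iter k (ldiv' x) e) by [].
rewrite IH -{1}(pw1 x) ldiv'_pw; congr (pw x _); lia.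
Qed.

Lemma op_lpow x n : lpow op e ldiv' x n = lpow mul e ldiv x n.
Proof.
case: n => [|p|p] //=.
- by rewrite iter_op positive_nat_Z.
- rewrite iter_ldiv' positive_nat_Z. by [].
Qed.
End Div.

End Base.

Theorem proposition4p4 (T : Type) (mul ldiv rdiv : T -> T -> T) (e : T) :
  commutative_A_loop mul e ldiv rdiv ->
  let op := oplus mul ldiv e in
  is_loop op e /\ commutative_op op /\
  (forall ldiv' rdiv' : T -> T -> T,
     is_ldiv op ldiv' -> is_rdiv op rdiv' ->
     power_associative op e ldiv' rdiv' /\
     (forall x (n : Z), lpow op e ldiv' x n = lpow mul e ldiv x n)).
Proof.
move=> HA op.
split; first exact: (@op_is_loop _ _ _ _ _ HA).
split; first by move=> x y; exact: (@opC _ _ _ _ _ HA).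
move=> ldiv' rdiv' Hl Hr; split.
- exact: (@op_pa _ _ _ _ _ HA _ _ Hl Hr).
- move=> x n; exact: (@op_lpow _ _ _ _ _ HA _ Hl).
Qed.
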